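(* Let $\lambda>0$. For any $\alpha_1,\alpha_2>0$ there exists $\alpha_3=\alpha_3(\alpha_1,\alpha_2)>0$ such that, for every $n$, $\rho(u)\le\alpha_3$ for all $u\in X_0(\Omega)$ with $I_{n,\lambda}(u)\le\alpha_1$ and $\|u\|_{p_n}\le\alpha_2$.
   Context: Let $N\ge3$, $s\in(0,1)$ with $s>\frac12$ if $N=3$, $2^*=\frac{2N}{N-2}$, and $p\in(2+\frac{4s}{N-2},2^* )$ if $N>6-4s$, $p\in(2^*-1,2^* )$ if $N\le6-4s$. $\Omega\subset\mathbb{R}^N$ bounded open with $C^{1,\alpha}$ boundary; $X_0(\Omega)=\{u\in H^1(\mathbb{R}^N):u|_\Omega\in H^1_0(\Omega),\ u=0\text{ a.e. outside }\Omega\}$ with norm $\rho(u)=(\|\nabla u\|_2^2+[u]_s^2)^{1/2}$, $[u]_s^2=\iint\frac{|u(x)-u(y)|^2}{|x-y|^{N+2s}}$. $p_n\in(p,2^* )$ with $p_n\to2^*$. $I_{n,\lambda}(u)=\frac12\rho(u)^2-\frac\lambda p\|u\|_p^p-\frac1{p_n}\|u\|_{p_n}^{p_n}$; $\|\cdot\|_q$ denotes the $L^q$ norm. *)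

(* Defs.v *)
From HB Require Import structures.
From mathcomp Require Import all_boot all_order all_algebra.
From mathcomp Require Import all_classical all_reals all_analysis.
Set Implicit Arguments.
Unset Strict Implicit.
Unset Printing Implicit Defensive.
Import Order.TTheory GRing.Theory Num.Theory.
Import numFieldNormedType.Exports.
Local Open Scope classical_set_scope.
Local Open Scope ring_scope.

Section Defs.
Variable R : realType.

Definition enorm k (x : 'rV[R]_k) : R := Num.sqrt (\sum_(i < k) x ord0 i ^+ 2).

(* Lebesgue integral over R^k of a nonnegative (Borel) function, computed as
   an iterated integral of the 1-d Lebesgue measure (Tonelli). *)
Fixpoint intN (k : nat) : ('rV[R]_k -> \bar R) -> \bar R :=
  match k with
  | 0 => fun f => f 0
  | k'.+1 => fun f =>
      (\int[@lebesgue_measure R]_t intN (fun v : 'rV[R]_k' =>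
                 f (row_mx (\row_(j < 1) t) v)))%E
  end.

Definition intN_on k (A : set 'rV[R]_k) (f : 'rV[R]_k -> \bar R) : \bar R :=
  intN (fun x => if x \in A then f x else 0%E).

Definition sintN k (f : 'rV[R]_k -> R) : \bar R :=
  (intN (fun x => (Num.max (f x) 0)%:E) - intN (fun x => (Num.max (- f x) 0)%:E))%E.

Definition Lq k (q : R) (f : 'rV[R]_k -> R) : \bar R :=
  ((intN (fun x => (`|f x| `^ q)%:E)) `^ q^-1)%E.

Definition borelN k : set (set 'rV[R]_k) := <<s [set A | open A] >>.
Definition borel_fun k (f : 'rV[R]_k -> R) :=
  forall B : set R, measurable B -> borelN (f @^-1` B).

Definition ej k (i : 'I_k) : 'rV[R]_k := delta_mx ord0 i.

Fixpoint dpart k (l : seq 'I_k) (f : 'rV[R]_k -> R) : 'rV[R]_k -> R :=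
  match l with
  | [::] => f
  | i :: l' => fun x => 'D_(ej i) (dpart l' f) x
  end.

Definition smooth k (f : 'rV[R]_k -> R) :=
  forall l : seq 'I_k, continuous (dpart l f) /\
    forall i x, derivable (dpart l f) x (ej i).

Definition supp k (f : 'rV[R]_k -> R) := closure [set x | f x != 0].

Definition test_fun k (f : 'rV[R]_k -> R) := smooth f /\ compact (supp f).
Definition test_fun_on k (A : set 'rV[R]_k) f := test_fun f /\ supp f `<=` A.

Definition weak_grad k (u : 'rV[R]_k -> R) (g : 'I_k -> 'rV[R]_k -> R) :=
  forall phi, test_fun phi -> forall i,
    sintN (fun x => u x * 'D_(ej i) phi x) = (- sintN (fun x => (g i x * phi x)%R))%E.

Definition H1 k (u : 'rV[R]_k -> R) (g : 'I_k -> 'rV[R]_k -> R) :=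
  [/\ borel_fun u, forall i, borel_fun (g i),
      (intN (fun x => (u x ^+ 2)%:E) < +oo)%E,
      forall i, (intN (fun x => (g i x ^+ 2)%:E) < +oo)%E
    & weak_grad u g].

(* X_0(Omega): u in H^1(R^k), u = 0 a.e. outside Omega, and u|_Omega in
   H^1_0(Omega) (limit in the H^1(Omega) norm of C_c^infinity(Omega) functions) *)
Definition X0 k (Om : set 'rV[R]_k) (u : 'rV[R]_k -> R)
    (g : 'I_k -> 'rV[R]_k -> R) :=
  [/\ H1 u g,
      intN_on (~` Om) (fun x => (`|u x|)%:E) = 0%E
    & exists phi : nat -> 'rV[R]_k -> R,
        [/\ forall m, test_fun_on Om (phi m),
            (fun m => intN_on Om (fun x => ((phi m x - u x) ^+ 2)%:E))
               @ \oo --> 0%E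
          & forall i, (fun m => intN_on Om
               (fun x => (('D_(ej i) (phi m) x - g i x) ^+ 2)%:E)) @ \oo --> 0%E]].

Definition grad_sq k (g : 'I_k -> 'rV[R]_k -> R) : \bar R :=
  intN (fun x => (\sum_(i < k) g i x ^+ 2)%:E).

Definition gagliardo_sq k (s : R) (u : 'rV[R]_k -> R) : \bar R :=
  intN (fun y => intN (fun x =>
     ((u x - u y) ^+ 2 / (enorm (x - y) `^ (k%:R + 2 * s)))%:E)).

Definition rho k (s : R) (u : 'rV[R]_k -> R) (g : 'I_k -> 'rV[R]_k -> R) : \bar R :=
  ((grad_sq g + gagliardo_sq s u) `^ (2^-1))%E.

Definition Ifun k (s lam p pn : R) (u : 'rV[R]_k -> R) (g : 'I_k -> 'rV[R]_k -> R)
  : \bar R :=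
  ((2^-1)%:E * (rho s u g) `^ 2 - (lam / p)%:E * (Lq p u) `^ p
     - (pn^-1)%:E * (Lq pn u) `^ pn)%E.

Definition bounded_dom k (Om : set 'rV[R]_k) :=
  exists M : R, forall x, Om x -> enorm x <= M.

Definition C1a m (gam : 'rV[R]_m -> R) (a : R) :=
  (forall y (j : 'I_m), derivable gam y (ej j)) /\
  exists C : R, forall (j : 'I_m) y z,
    `|'D_(ej j) gam y - 'D_(ej j) gam z| <= C * enorm (y - z) `^ a.

(* Omega has C^{1,alpha} boundary: near each boundary point, after a rigid
   motion (orthogonal Q, the last of the k new coordinates being the
   vertical one), Omega is the strict epigraph of a C^{1,alpha} function of N-1
   variables *)
Definition C1a_boundary k (Om : set 'rV[R]_k) :=
  exists a : R, 0 < a <= 1 /\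
  forall x0, closure Om x0 -> closure (~` Om) x0 ->
    exists r : R, 0 < r /\
    exists Q : 'M[R]_(k, k.-1 + 1), Q *m Q^T = 1%:M /\
    exists gam : 'rV[R]_k.-1 -> R, C1a gam a /\
      forall x, enorm (x - x0) < r ->
        (Om x <-> (let y := (x - x0) *m Q in
                   gam (lsubmx y) < rsubmx y ord0 ord0)).

Definition crit (N : nat) : R := 2 * N%:R / (N%:R - 2).

Definition p_admissible (N : nat) (s p : R) :=
  if 6 - 4 * s < N%:R then 2 + 4 * s / (N%:R - 2) < p < crit N
  else crit N - 1 < p < crit N.

End Defs.

(* Main.v *)
Require Import Defs.
From HB Require Import structures.
From mathcomp Require Import all_boot all_order all_algebra.
From mathcomp Require Import all_classical all_reals all_analysis.
From mathcomp Require Import measurable_realfun lra.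
Import Order.TTheory GRing.Theory Num.Theory.
Import numFieldNormedType.Exports.
Local Open Scope classical_set_scope.
Local Open Scope ring_scope.

Set Implicit Arguments.
Unset Strict Implicit.

Section S.
Variable R : realType.
Definition M k := g_sigma_algebraType [set A : set 'rV[R]_k | open A].
Definition RM k (z : (measurableTypeR R * M k)%type) : M k.+1 := row_mx (\row_(j < 1) z.1) z.2.

Lemma ballR (x e y : R) : ball x e y <-> `|x - y| < e.
Proof. by rewrite /ball /=. Qed.

Lemma ballM k (x : 'rV[R]_k) e y : ball x e y <-> (0 < e /\ forall j, `|x ord0 j - y ord0 j| < e).
Proof.
split.
  by move=> [e0 H]; split=> // j; have := H ord0 j; rewrite /ball /=.
move=> [e0 H]; split=> // i j; rewrite ord1; exact: H.
Qed.

Lemma M_open k (A : set (M k)) : open (A : set 'rV[R]_k) -> measurable A.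
Proof. by move=> oA; apply: sub_sigma_algebra. Qed.

Lemma RM_measurable k : measurable_fun setT (@RM k).
Proof.
apply: (@measurability _ _ _ _ setT (@RM k) [set A : set (M k.+1) | open (A : set 'rV[R]_k.+1)]) => //.
move=> _ [U oU <-]; rewrite setTI.
pose I := (rat * 'rV[rat]_k * rat)%type.
pose box (i : I) : set (measurableTypeR R * M k) :=
  ball (ratr i.1.1 : R) (ratr i.2) `*` ball (map_mx ratr i.1.2 : 'rV[R]_k) (ratr i.2).
pose good (i : I) := (0 < (ratr i.2 : R)) /\ box i `<=` RM (k:=k) @^-1` U.
pose F (n : nat) := match (@unpickle I n) with
  | Some i => if pselect (good i) is left _ then box i else set0
  | None => set0 end.
suff -> : @RM k @^-1` U = \bigcup_n F n.
  apply: bigcupT_measurable => n; rewrite /F; case: (unpickle n) => // i.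
  case: pselect => // _; apply: measurableX.
    apply: open_measurable; exact: ball_open.
  apply: M_open; exact: ball_open.
apply/seteqP; split; last first.
  move=> z [n _]; rewrite /F; case: (unpickle n) => // i.
  by case: pselect => // -[_ gi]; apply: gi.
move=> [t v] /= Uz.
have := oU _ Uz => /nbhs_ballP [e /= e0 He].
have /rat_in_itvoo [r]: (0 : R) < e / 2 by rewrite divr_gt0.
rewrite in_itv /= => /andP [r0 re].
have /rat_in_itvoo [q]: t - ratr r < t + ratr r by rewrite ltrD2l gtrN.
rewrite in_itv /= => /andP [q1 q2].
have [wf Hw] : exists wf : 'I_k -> rat, forall j,
    v ord0 j - ratr r < ratr (wf j) < v ord0 j + ratr r.
  apply: (@fin_all_exists _ (fun=> rat) (fun j w => v ord0 j - ratr r < ratr w < v ord0 j + ratr r)).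
  move=> j; have /rat_in_itvoo [w] : v ord0 j - ratr r < v ord0 j + ratr r.
    by rewrite ltrD2l gtrN.
  by rewrite in_itv /=; exists w.
pose i : I := (q, \row_j wf j, r).
exists (pickle i); first exact: Logic.I.
rewrite /F (pickleK i).
have gi : good i.
  split => //= -[t' v'] [/= /ballR bt /ballM [_ bv]] /=.
  apply: He; apply/ballM; split => // j.
  rewrite /RM /=; case: (@splitP 1 k j) => j' Hj.
    have -> : j = lshift k j' by apply: val_inj.
    rewrite (@row_mxEl _ 1 1 k (\row__ t) v) (@row_mxEl _ 1 1 k (\row__ t') v') !mxE.
    rewrite (@le_lt_trans _ _ (`|t - ratr q| + `|ratr q - t'|)) //.
      by rewrite (le_trans _ (ler_normD _ _)) // addrA subrK.
    rewrite (@lt_le_trans _ _ (ratr r + ratr r)) //.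
      rewrite ltrD //.
      by rewrite ltr_norml; apply/andP; split; lra.
    by rewrite [leRHS]splitr lerD // ltW.
  have -> : j = rshift 1 j' by apply: val_inj.
  rewrite (@row_mxEr _ 1 1 k (\row__ t) v) (@row_mxEr _ 1 1 k (\row__ t') v').
  have := bv j'; rewrite !mxE => bvj.
  have /andP [w1 w2] := Hw j'.
  rewrite (@le_lt_trans _ _ (`|v ord0 j' - ratr (wf j')| + `|ratr (wf j') - v' ord0 j'|)) //.
    by rewrite (le_trans _ (ler_normD _ _)) // addrA subrK.
  rewrite (@lt_le_trans _ _ (ratr r + ratr r)) //.
    rewrite ltrD //.
    by rewrite ltr_norml; apply/andP; split; lra.
  by rewrite [leRHS]splitr lerD // ltW.
case: pselect => // _.
split => /=.
  apply/ballR; by rewrite ltr_norml; apply/andP; split; lra.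
apply/ballM; split => // j; rewrite !mxE.
have /andP [w1 w2] := Hw j.
by rewrite ltr_norml; apply/andP; split; lra.
Qed.

Local Open Scope ereal_scope.

Definition mnext k (m : set (M k) -> \bar R) : set (M k.+1) -> \bar R :=
  pushforward (lebesgue_measure \x m) (@RM k).

Section mnext_measure.
Variable k : nat.
Variable m : {sigma_finite_measure set (M k) -> \bar R}.

Let mnext0 : mnext m set0 = 0.
Proof. by rewrite /mnext /pushforward preimage_set0 measure0. Qed.

Let mnext_ge0 A : 0 <= mnext m A.
Proof. exact: (measure_ge0 (lebesgue_measure \x m)). Qed.

Let mnext_sigma_additive : semi_sigma_additive (mnext m).
Proof.
move=> F mF tF mUF; rewrite /mnext /pushforward preimage_bigcup.
apply: measure_semi_sigma_additive.
- by move=> n; rewrite -[X in measurable X]setTI; exact: RM_measurable.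
- apply/trivIsetP => /= i j _ _ ij; rewrite -preimage_setI.
  by move/trivIsetP : tF => /(_ _ _ _ _ ij) ->//; rewrite preimage_set0.
- by rewrite -preimage_bigcup -[X in measurable X]setTI; exact: RM_measurable.
Qed.

HB.instance Definition _ := isMeasure.Build _ _ _
  (mnext m) mnext0 mnext_ge0 mnext_sigma_additive.

End mnext_measure.

Lemma ball_le0 k (r : R) : (r <= 0)%R -> ball (0%R : 'rV[R]_k) r = set0.
Proof.
move=> r0; apply/seteqP; split => // x /ballM [r0' _].
by move: (lt_le_trans r0' r0); rewrite ltxx.
Qed.

Lemma mnext_ball k (m : {sigma_finite_measure set (M k) -> \bar R}) :
  (forall r, m (ball (0%R : 'rV[R]_k) r) < +oo) ->
  forall r, mnext m (ball (0%R : 'rV[R]_k.+1) r) < +oo.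
Proof.
move=> Hm r; have [r0|r0] := leP r 0%R.
  by rewrite ball_le0 // measure0.
have mB : measurable (ball (0%R : 'rV[R]_k.+1) r : set (M k.+1)).
  apply: M_open; exact: ball_open.
rewrite /mnext /pushforward.
apply: (@le_lt_trans _ _ ((lebesgue_measure \x m)
   (ball (0%R : R) r `*` (ball (0%R : 'rV[R]_k) r : set (M k))))).
  apply: le_measure; rewrite ?inE.
  - by rewrite -[X in measurable X]setTI; exact: RM_measurable.
  - apply: measurableX; first by apply: open_measurable; exact: ball_open.
    by apply: M_open; exact: ball_open.
  - move=> [t v] /= /ballM [_ H]; split.
      have := H (@lshift 1 k ord0).
      by rewrite /RM (@row_mxEl _ 1 1 k) !mxE => h; apply/ballR.
    apply/(@ballM k); split => // j; have := H (rshift 1 j).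
    by rewrite /RM (@row_mxEr _ 1 1 k) !mxE.
rewrite product_measure1E; last 2 first.
  - by apply: open_measurable; exact: ball_open.
  - by apply: M_open; exact: ball_open.
have hb : (@lebesgue_measure R (ball (0%R:R) r)) \is a fin_num.
  by rewrite lebesgue_measure_ball ?ltW.
rewrite -ge0_fin_numE; last by apply: mule_ge0 => //.
by rewrite fin_numM // ge0_fin_numE // Hm.
Qed.

Lemma sigma_finite_ball k (mu : {measure set (M k) -> \bar R}) :
  (forall r, mu (ball (0%R : 'rV[R]_k) r) < +oo) -> sigma_finite setT mu.
Proof.
move=> Hm; exists (fun i : nat => ball (0%R : 'rV[R]_k) i%:R); last first.
  by move=> i; split => //; by apply: M_open; exact: ball_open.
apply/seteqP; split => // x _.
exists (Num.truncn (\sum_j `|x ord0 j|)).+1 => //.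
apply/ballM; split => // j.
rewrite mxE sub0r normrN (le_lt_trans _ (truncnS_gt _)) //.
rewrite (bigD1 j) //= lerDl; apply: sumr_ge0 => *; exact: normr_ge0.
Qed.


Definition mnextS k (m : {sigma_finite_measure set (M k) -> \bar R})
  (mb : forall r, m (ball (0%R : 'rV[R]_k) r) < +oo) : set (M k.+1) -> \bar R :=
  mnext m.

Section mnextS_inst.
Variables (k : nat) (m : {sigma_finite_measure set (M k) -> \bar R}).
Variable (mb : forall r, m (ball (0%R : 'rV[R]_k) r) < +oo).
HB.instance Definition _ := Measure.on (mnextS mb).
HB.instance Definition _ := Measure_isSigmaFinite.Build _ _ _ (mnextS mb)
  (sigma_finite_ball (mu := mnextS mb) (mnext_ball mb)).
End mnextS_inst.

Lemma intN_measure k : exists m : {sigma_finite_measure set (M k) -> \bar R},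
  (forall r, m (ball (0%R : 'rV[R]_k) r) < +oo) /\
  forall f : M k -> \bar R, measurable_fun setT f -> (forall x, 0 <= f x) ->
    intN f = \int[m]_x f x.
Proof.
elim: k => [|k [m [mb mi]]].
  exists (\d_(0%R : M 0)); split.
    by move=> r; rewrite /dirac ltry.
  move=> f mf f0 /=.
  by rewrite integral_dirac // /dirac indicE in_setT mul1e.
exists (mnextS mb : {sigma_finite_measure set (M k.+1) -> \bar R}); split; first exact: mnext_ball.
move=> f mf f0 /=.
have mfRM : measurable_fun setT (f \o @RM k) := measurableT_comp mf (@RM_measurable k).
transitivity (\int[lebesgue_measure]_t \int[m]_v (f \o @RM k) (t, v)).
  apply: eq_integral => t _; apply: mi.
    exact: (measurable_fun_pair2 t mfRM).
  by move=> v; exact: f0.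
have := fubini_tonelli1 (m1 := lebesgue_measure) (m2 := m) _ mfRM (fun z => f0 _).
rewrite /fubini_F => <-.
rewrite /mnextS /= /mnext ge0_integral_pushforward //.
- exact: RM_measurable.
Qed.

End S.

Unset Implicit Arguments.
Set Strict Implicit.

Lemma pow_bound (R : realType) (y p q : R) : 0 <= y -> 1 <= p -> p <= q ->
  y `^ p <= y `^ q + y /\ y `^ p <= y `^ q + 1.
Proof.
move=> y0 p1 pq.
have q0 : 0 <= y `^ q by exact: powR_ge0.
have [y1|y1] := leP y 1.
  have yp : y `^ p <= y.
    have [->|yn0] := eqVneq y 0; first by rewrite powR0 // gt_eqF // (lt_le_trans ltr01).
    by apply: ge1r_powR => //; rewrite y1 andbT lt_neqAle eq_sym yn0.
  by split; lra.
have : y `^ p <= y `^ q by apply: ler_powR => //; exact: ltW.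
by split; lra.
Qed.

Lemma coord_le_enorm (R : realType) k (x : 'rV[R]_k) j : `|x ord0 j| <= enorm x.
Proof.
rewrite /enorm -sqrtr_sqr ler_sqrt; last by apply: sumr_ge0 => *; exact: sqr_ge0.
by rewrite (bigD1 j) //= lerDl; apply: sumr_ge0 => *; exact: sqr_ge0.
Qed.

Theorem lemma3p3 (R : realType) (N : nat) (s p : R) (pn : nat -> R)
    (Om : set 'rV[R]_N) (lam : R) :
  (3 <= N)%N -> 0 < s < 1 -> (N = 3%N -> 2^-1 < s) ->
  p_admissible N s p ->
  (forall n, p < pn n < crit R N) -> pn @ \oo --> crit R N ->
  open Om -> bounded_dom Om -> C1a_boundary Om ->
  0 < lam ->
  forall a1 a2 : R, 0 < a1 -> 0 < a2 ->
  exists a3 : R, 0 < a3 /\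
    forall (n : nat) (u : 'rV[R]_N -> R) (g : 'I_N -> 'rV[R]_N -> R),
      X0 Om u g ->
      (Ifun s lam p (pn n) u g <= a1%:E)%E ->
      (Lq (pn n) u <= a2%:E)%E ->
      (rho s u g <= a3%:E)%E.
Proof.
move=> N3 /andP[s0 s1] _ padm hpn _ oOm [Mb HMb] _ lam0 a1 a2 a10 a20.
have N3R : (3 : R) <= N%:R by rewrite (ler_nat R 3 N).
have crit2 : 2 <= crit R N.
  rewrite /crit ler_pdivlMr; last by lra.
  lra.
have p1 : 1 < p.
  move: padm; rewrite /p_admissible; case: ifP => _ /andP[h _].
    have : 0 <= 4 * s / (N%:R - 2) by apply: divr_ge0; lra.
    lra.
  lra.
have [mN [mb mi]] := intN_measure R N.
have mOm : measurable (Om : set (M R N)) by apply: M_open.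
have OmB : (mN Om < +oo)%E.
  apply: (@le_lt_trans _ _ (mN (ball (0%R : 'rV[R]_N) (`|Mb| + 1)))); last exact: mb.
  apply: le_measure; rewrite ?inE //; first by apply: M_open; exact: ball_open.
  move=> x Omx; apply/ballM; split; first by rewrite ltr_wpDl.
  move=> j; rewrite mxE sub0r normrN.
  have := @coord_le_enorm R N x j; have := HMb x Omx; have := ler_norm Mb.
  lra.
set V := fine (mN Om).
have V0 : 0 <= V by apply: fine_ge0; exact: measure_ge0.
have VOm : mN Om = V%:E by rewrite fineK // ge0_fin_numE.
set K2 := (1 + a2) `^ crit R N.
have K20 : 0 <= K2 by exact: powR_ge0.
set C := a1 + lam / p * (K2 + V) + K2 / p.
exists ((2 * C) `^ 2^-1 + 1); split.
  have := powR_ge0 (2 * C) 2^-1; lra.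
move=> n u g [[bu _ _ _ _] uOm _] HI HL.
have /andP [pq qc] := hpn n.
set q := pn n in pq qc HI HL *.
have q0 : 0 < q by lra.
have mu : measurable_fun setT (u : M R N -> R).
  by move=> _ Y mY; rewrite setTI; exact: bu.
have mabs : measurable_fun setT (fun x : M R N => `|u x|).
  by apply: measurableT_comp => //; exact: normr_measurable.
have mpow r : measurable_fun setT (fun x : M R N => (`|u x| `^ r)%:E).
  by apply/measurable_EFinP; exact: (measurableT_comp (measurable_powR r) mabs).
have mC : measurable_fun setT (fun x : M R N => (\1_(~` Om) x * `|u x|)%:E).
  apply/measurable_EFinP; apply: measurable_funM => //.
  by apply: measurable_indic; exact: measurableC.
have mO : measurable_fun setT (fun x : M R N => (\1_Om x : R)%:E).
  by apply/measurable_EFinP; exact: measurable_indic.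
have IC : (\int[mN]_x (\1_(~` Om) x * `|u x|)%:E = 0)%E.
  rewrite -(mi _ mC); last by move=> x; rewrite lee_fin mulr_ge0.
  rewrite -uOm /intN_on; congr intN; apply/funext => x; rewrite indicE.
  by case: (x \in ~` Om); rewrite ?mul1r ?mul0r.
have HA : (\int[mN]_x (`|u x| `^ p)%:E <= \int[mN]_x (`|u x| `^ q)%:E + V%:E)%E.
  apply: (@le_trans _ _ (\int[mN]_x ((`|u x| `^ q)%:E + (\1_Om x)%:E
                     + (\1_(~` Om) x * `|u x|)%:E))%E).
    apply: ge0_le_integral => //.
    - by apply: emeasurable_funD => //; apply: emeasurable_funD.
    - move=> x _; rewrite -!EFinD lee_fin.
      have [h1 h2] := @pow_bound R _ _ _ (normr_ge0 (u x)) (ltW p1) (ltW pq).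
      rewrite !indicE in_setC; case: (x \in Om) => /=; lra.
  rewrite ge0_integralD //; try (by move=> x _; rewrite ?adde_ge0 // lee_fin ?powR_ge0); try (exact: emeasurable_funD).
  rewrite ge0_integralD //; try (by move=> x _; rewrite lee_fin ?powR_ge0).
  rewrite integral_indic // setIT IC adde0 -VOm; exact: lexx.
have IB0 : (0 <= \int[mN]_x (`|u x| `^ q)%:E)%E.
  by apply: integral_ge0 => x _; rewrite lee_fin powR_ge0.
have IA0 : (0 <= \int[mN]_x (`|u x| `^ p)%:E)%E.
  by apply: integral_ge0 => x _; rewrite lee_fin powR_ge0.
have LqE r : Lq r u = ((\int[mN]_x (`|u x| `^ r)%:E) `^ r^-1)%E.
  by rewrite /Lq (mi _ (mpow r)) // => x; rewrite lee_fin powR_ge0.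
have [b Eb b0] : exists2 b, (\int[mN]_x (`|u x| `^ q)%:E)%E = b%:E & 0 <= b.
  move: HL IB0; rewrite LqE.
  case: (\int[mN]_x (`|u x| `^ q)%:E)%E => [b| |] //.
    by move=> _; rewrite lee_fin => b0; exists b.
  by rewrite poweRyr // invr_neq0 // gt_eqF.
have bK : b <= K2.
  move: HL; rewrite LqE Eb poweR_EFin lee_fin => hb.
  have -> : b = (b `^ q^-1) `^ q by rewrite -powRrM mulVf ?powRr1 // gt_eqF.
  apply: (@le_trans _ _ (a2 `^ q)).
    by apply: ge0_ler_powR => //; rewrite ?ltW // nnegrE ?powR_ge0 ?ltW.
  apply: (@le_trans _ _ ((1 + a2) `^ q)).
    by apply: ge0_ler_powR; rewrite ?nnegrE; lra.
  by rewrite /K2; apply: ler_powR; [lra | exact: ltW].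
have [a Ea [a0 aK]] : exists2 a, (\int[mN]_x (`|u x| `^ p)%:E)%E = a%:E & 0 <= a /\ a <= b + V.
  move: HA IA0; rewrite Eb.
  case: (\int[mN]_x (`|u x| `^ p)%:E)%E => [a| |] //.
  by rewrite -EFinD !lee_fin => h1 h2; exists a.
have p0 : 0 < p by lra.
have LpP : ((Lq p u) `^ p = a%:E)%E.
  by rewrite LqE Ea -poweRrM mulVf ?poweRe1 // gt_eqF.
have LqP : ((Lq q u) `^ q = b%:E)%E.
  by rewrite LqE Eb -poweRrM mulVf ?poweRe1 // gt_eqF.
move: HI; rewrite /Ifun LpP LqP.
have rho0 : (0 <= rho s u g)%E by exact: poweR_ge0.
move: rho0; case: (rho s u g) => [r| |] //; last first.
  move=> _; rewrite poweRyr // gt0_muley ?lte_fin ?invr_gt0 //.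
rewrite !lee_fin => r0 HI.
have hinv : q^-1 <= p^-1 by rewrite lef_pV2 ?posrE //; lra.
have h1 : lam / p * a <= lam / p * (K2 + V).
  by apply: ler_wpM2l; [rewrite divr_ge0 //; lra | lra].
have h2 : q^-1 * b <= p^-1 * K2.
  apply: (@le_trans _ _ (p^-1 * b)); first by apply: ler_wpM2r.
  by apply: ler_wpM2l => //; rewrite invr_ge0; lra.
have r2 : r `^ 2 <= 2 * C.
  rewrite /C; have : K2 / p = p^-1 * K2 by rewrite mulrC.
  lra.
have -> : r = (r `^ 2) `^ 2^-1 by rewrite -powRrM mulfV ?powRr1.
have : (r `^ 2) `^ 2^-1 <= (2 * C) `^ 2^-1.
  apply: ge0_ler_powR => //; rewrite ?nnegrE ?powR_ge0 //.
  by apply: le_trans r2; exact: powR_ge0.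
lra.
Qed.
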